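(* Let $f$ be a noisy process with noise variance $\sigma^2>0$ and $\pi_f$ its posterior prediction map. Then $\pi_f$ is continuous: if $D_i\to D$ in $(\mathcal D,d_{\mathcal D})$, then $\pi_f(D_i)\rightharpoonup\pi_f(D)$ in the sense of weak convergence of noisy processes.
   Context: A stochastic process $f$ on $\mathbb R$ is noisy with noise variance $\sigma^2>0$ if $f=f^{\mathrm s}+f^{\mathrm n}$ with $f^{\mathrm s},f^{\mathrm n}$ independent, $f^{\mathrm s}$ (smooth part) having continuous sample paths, and $(f^{\mathrm n}(x_1),\dots,f^{\mathrm n}(x_n))\sim\mathcal N(\mathbf 0,\sigma^2\mathbf I_n)$ for pairwise distinct $x_i$. Data sets: $\mathcal D=\bigcup_{n\ge0}(\mathbb R\times\mathbb R)^n$, $D=(\mathbf x,\mathbf y)$, with metric $d_{\mathcal D}(D_1,D_2)=\|\mathbf x_1-\mathbf x_2\|_2+\|\mathbf y_1-\mathbf y_2\|_2$ if $|\mathbf x_1|=|\mathbf x_2|$ and $\infty$ otherwise. Posterior prediction map: for $D=(\mathbf x,\mathbf y)$, let $f^{\mathrm s}_D$ have law $\mu^{\mathrm s}_D$ with $\frac{d\mu^{\mathrm s}_D}{d\mu^{\mathrm s}}(g)=\frac{\mathcal N(\mathbf y\mid g(\mathbf x),\sigma^2\mathbf I)}{\mathbb E[\mathcal N(\mathbf y\mid f^{\mathrm s}(\mathbf x),\sigma^2\mathbf I)]}$, where $\mu^{\mathrm s}$ is the law of $f^{\mathrm s}$ on $C(\mathbb R,\mathbb R)$; $\pi_f(D)$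 is the noisy process $f^{\mathrm s}_D+\hat f^{\mathrm n}$ with $\hat f^{\mathrm n}$ an independent copy of $f^{\mathrm n}$. Weak convergence of noisy processes: $f_i\rightharpoonup f$ iff $f^{\mathrm s}_i\rightharpoonup f^{\mathrm s}$ weakly as random elements of $C(\mathbb R,\mathbb R)$ with the topology of uniform convergence on compact sets, and the noise variances converge. *)

(* Defs.v *)
From HB Require Import structures.
From mathcomp Require Import all_boot all_order all_algebra.
From mathcomp Require Import all_classical all_reals all_analysis.
Set Implicit Arguments. Unset Strict Implicit. Unset Printing Implicit Defensive.
Import Order.TTheory GRing.Theory Num.Theory.
Import numFieldNormedType.Exports.
Local Open Scope classical_set_scope.
Local Open Scope ring_scope.

Section gp_defs.
Context {R : realType}.

(** The space of functions R -> R with the topology of uniform convergence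
    on compact sets (compact convergence). C(R,R) is the subspace
    [cont_fns] of continuous functions. *)
Definition ucc := {family compact, R -> R}.
Definition cont_fns : set ucc := [set g : ucc | continuous (g : R -> R)].

Definition dataset := seq (R * R).

Definition dD (D1 D2 : dataset) : \bar R :=
  if size D1 == size D2 then
    (Num.sqrt (\sum_(p <- zip D1 D2) (p.1.1 - p.2.1) ^+ 2) +
     Num.sqrt (\sum_(p <- zip D1 D2) (p.1.2 - p.2.2) ^+ 2))%:E
  else +oo%E.

Definition likelihood (sigma2 : R) (D : dataset) (g : R -> R) : R :=
  \prod_(p <- D) normal_pdf (g p.1) (Num.sqrt sigma2) p.2.

Definition indep_families d (Omega : measurableType d) (P : probability Omega R)
  (F G : set (set Omega)) : Prop :=
  forall A B, F A -> G B -> P (A `&` B) = (P A * P B)%E.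

Definition noisy_process d (Omega : measurableType d) (P : probability Omega R)
  (f fs fn : Omega -> R -> R) (sigma2 : R) : Prop :=
  0 < sigma2 /\
      (forall w x, f w x = fs w x + fn w x) /\
      (* fs : random element of C(R,R) (Borel measurable for the ucc topology)
         with continuous sample paths *)
      (forall w, continuous (fs w)) /\
      (forall U : set ucc, open U -> measurable ((fs : Omega -> ucc) @^-1` U)) /\
      (* fn : a process (each fn(x) a random variable) whose finite-dimensional
         marginals at pairwise distinct points are N(0, sigma2 I_n) *)
      (forall x, measurable_fun setT (fun w => fn w x)) /\
      (forall (n : nat) (xs : 'I_n -> R), injective xs ->
        forall B : 'I_n -> set R, (forall i, measurable (B i)) ->
        P [set w | forall i, B i (fn w (xs i))] =
        (\prod_(i < n) normal_prob 0 (Num.sqrt sigma2) (B i))%E) /\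
      indep_families P
        (<<s [set (fs : Omega -> ucc) @^-1` U | U in [set U : set ucc | open U]] >>)
        (<<s \bigcup_(x in [set: R])
               [set (fun w => fn w x) @^-1` B | B in [set B : set R | measurable B]] >>).

(** Expectation E[h(fs_D)] of a test function h under the posterior law
    mu^s_D of the smooth part, where d mu^s_D / d mu^s (g)
      = N(y | g(x), sigma2 I) / E[N(y | fs(x), sigma2 I)],
    i.e. \int h d mu^s_D = E[h(fs) N(y|fs(x),sigma2 I)] / E[N(y|fs(x),sigma2 I)]. *)
Definition post_smooth_expect d (Omega : measurableType d) (P : probability Omega R)
  (fs : Omega -> R -> R) (sigma2 : R) (D : dataset) (h : ucc -> R) : R :=
  Rintegral P setT (fun w => h (fs w) * likelihood sigma2 D (fs w)) /
  Rintegral P setT (fun w => likelihood sigma2 D (fs w)).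

(** Weak convergence of noisy processes, given the laws of their smooth parts
    (through the expectation functionals E_ i, E of test functions) and their
    noise variances s2_ i, s2: the smooth parts converge weakly as random
    elements of C(R,R) (ucc topology) and the noise variances converge. *)
Definition noisy_weak_cvg (E_ : nat -> (ucc -> R) -> R) (s2_ : nat -> R)
  (E : (ucc -> R) -> R) (s2 : R) : Prop :=
  (forall h : ucc -> R,
      (exists M : R, forall g, cont_fns g -> `|h g| <= M) ->
      {within cont_fns, continuous h} ->
      E_ n h @[n --> \oo] --> E h) /\
  s2_ n @[n --> \oo] --> s2.

End gp_defs.

(* Main.v *)
Require Import Defs.
From HB Require Import structures.
From mathcomp Require Import all_boot all_order all_algebra.
From mathcomp Require Import all_classical all_reals all_analysis.
Import Order.TTheory GRing.Theory Num.Theory.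
Import numFieldNormedType.Exports.
Local Open Scope classical_set_scope.
Local Open Scope ring_scope.

Section aux.
Context {R : realType}.

Lemma ev_cont (t : R) : continuous (fun g : @ucc R => g t).
Proof.
move=> g.
have := @pointwise_cvg_compact_family R R (nbhs g) g _ cvg_id.

move=> H.
have H2 := H (nbhs_filter g).
exact: ((@pointwise_cvgP R R (nbhs g) g (nbhs_filter g)).1 H2 t).
Qed.

Lemma meas_within d (Omega : measurableType d) (fs : Omega -> R -> R)
  (phi : @ucc R -> R) :
  (forall w, continuous (fs w)) ->
  (forall U : set (@ucc R), open U -> measurable ((fs : Omega -> ucc) @^-1` U)) ->
  {within cont_fns, continuous phi} ->
  measurable_fun setT (fun w => phi (fs w)).
Proof.
move=> fsC fsM phiC.
apply: (measurability _ (measurable_realfun.RGenOpens.measurableE R)).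
move=> _ [_ [a [b ->] <-]].
have oab : open (`]a, b[%classic : set R) by exact: interval_open.
have /open_subspaceP [W oW WE] := (continuousP _).1 phiC _ oab.
rewrite setTI.
suff -> : (fun w => phi (fs w)) @^-1` `]a, b[ = (fs : Omega -> ucc) @^-1` W.
  exact: fsM.
apply/seteqP; split => w /=.
  move=> h.
  have : (W `&` cont_fns) (fs w : ucc).
    by rewrite WE; split => //; exact: fsC.
  by case.
move=> h.
have : ((from_subspace cont_fns phi @^-1` `]a, b[) `&` cont_fns) (fs w : ucc).
  by rewrite -WE; split => //; exact: fsC.
by case.
Qed.


Lemma npdf_shift (m s y : R) : s != 0 -> normal_pdf m s y = normal_pdf 0 s (y - m).
Proof. by move=> s0; rewrite !normal_pdfE //= /normal_fun subr0. Qed.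

Lemma npdf_gt0 (m s y : R) : s != 0 -> 0 < normal_pdf m s y.
Proof.
move=> s0; rewrite normal_pdfE //=; apply: mulr_gt0;
  [exact: normal_peak_gt0 | exact: expR_gt0].
Qed.

Lemma cvg_prod_ord {T} (F : set_system T) {FF : Filter F} n
  (u : 'I_n -> T -> R) (l : 'I_n -> R) :
  (forall j, u j x @[x --> F] --> l j) ->
  \prod_(j < n) u j x @[x --> F] --> \prod_(j < n) l j.
Proof.
elim: n u l => [|n IH] u l H.
  under eq_fun do rewrite big_ord0.
  rewrite big_ord0; exact: cvg_cst.
under eq_fun do rewrite big_ord_recr.
rewrite big_ord_recr /=; apply: cvgM; last exact: H.
exact: (IH (fun j => u (widen_ord (leqnSn n) j))).
Qed.

Definition lterm (s2 : R) (s : dataset) (g : R -> R) (j : nat) : R :=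
  normal_pdf (g (nth (0,0) s j).1) (Num.sqrt s2) (nth (0,0) s j).2.

Lemma likelihoodEn (s2 : R) (s : dataset) (g : R -> R) n : size s = n ->
  likelihood s2 s g = \prod_(j < n) lterm s2 s g j.
Proof.
by move=> <-; rewrite /likelihood (big_nth (0,0)) big_mkord.
Qed.

Lemma sqrt_neq0 (s2 : R) : 0 < s2 -> Num.sqrt s2 != 0.
Proof. by move=> s0; rewrite gt_eqF // sqrtr_gt0. Qed.

Lemma lik_cont (s2 : R) (s : @dataset R) : 0 < s2 ->
  continuous (fun g : @ucc R => likelihood s2 s g).
Proof.
move=> s0.
have -> : (fun g : @ucc R => likelihood s2 s g) =
    (fun g : @ucc R => \prod_(j < size s) lterm s2 s g j).
  by apply: funext => h; exact: likelihoodEn.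
move=> g.
apply: (@cvg_prod_ord _ (nbhs g) _ (size s) (fun j (x : @ucc R) => lterm s2 s x j)) => j.
rewrite /lterm.
have E : forall x : @ucc R, normal_pdf (x (nth (0, 0) s j).1) (Num.sqrt s2) (nth (0, 0) s j).2
   = normal_pdf 0 (Num.sqrt s2) ((nth (0, 0) s j).2 - x (nth (0, 0) s j).1).
  by move=> x; rewrite npdf_shift ?sqrt_neq0.
rewrite (funext E) E.
have h1 : (fun x : @ucc R => (nth (0,0) s j).2 - x (nth (0,0) s j).1) @ nbhs g -->
   (nth (0,0) s j).2 - g (nth (0,0) s j).1.
  apply: cvgB; [exact: cvg_cst | exact: ev_cont].
have h2 := cvg_comp _ _ h1 (@continuous_normal_pdf R 0 _ (sqrt_neq0 _ s0) ((nth (0,0) s j).2 - g (nth (0,0) s j).1)).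
exact: h2.
Qed.

Lemma lik_gt0 (s2 : R) (s : dataset) (g : R -> R) : 0 < s2 -> 0 < likelihood s2 s g.
Proof.
move=> s0; rewrite /likelihood; apply: prodr_gt0 => p _.
exact: npdf_gt0 (sqrt_neq0 _ s0).
Qed.

Lemma lik_ub (s2 : R) (s : dataset) (g : R -> R) : 0 < s2 ->
  likelihood s2 s g <= \prod_(p <- s) normal_peak (Num.sqrt s2).
Proof.
move=> s0; rewrite /likelihood; apply: ler_prod => p _.
by rewrite normal_pdf_ge0 /= normal_pdf_ub // sqrt_neq0.
Qed.

Lemma coord_le (s1 s2 : seq (R * R)) (F : R * R -> R) j :
  size s1 = size s2 -> (j < size s1)%N ->
  (F (nth (0,0) s1 j) - F (nth (0,0) s2 j)) ^+ 2 <=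
  \sum_(p <- zip s1 s2) (F p.1 - F p.2) ^+ 2.
Proof.
elim: s1 s2 j => [|a s1 IH] [|b s2] [|j] //= [E] Hj; rewrite big_cons.
  by apply: ler_wpDr => //; apply: sumr_ge0 => p _; exact: sqr_ge0.
by apply: ler_wpDl; [exact: sqr_ge0 | exact: IH].
Qed.


Lemma lik_cvg (s2 : R) (Ds : nat -> @dataset R) (D : @dataset R) (g : R -> R) :
  0 < s2 -> continuous g -> dD (Ds i) D @[i --> \oo] --> 0%E ->
  likelihood s2 (Ds i) g @[i --> \oo] --> likelihood s2 D g.
Proof.
move=> s0 gC H.
have nlt (e : R) : 0 < e -> \forall i \near \oo, (dD (Ds i) D < e%:E)%E.
  move=> e0.
  have hn : nbhs (0%E : \bar R) [set u | (u < e%:E)%E].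
    by apply: open_ereal_lt'; rewrite lte_fin.
  exact: H hn.
have key (e : R) : 0 < e -> \forall i \near \oo, size (Ds i) = size D /\
    forall j, (j < size D)%N ->
      `|(nth (0,0) (Ds i) j).1 - (nth (0,0) D j).1| < e /\
      `|(nth (0,0) (Ds i) j).2 - (nth (0,0) D j).2| < e.
  move=> e0; apply: filterS (nlt e e0) => i.
  rewrite /dD; case: eqP => [Es|_]; last by rewrite ltNge leey.
  rewrite lte_fin => Hi; split => // j jn.
  have jn' : (j < size (Ds i))%N by rewrite Es.
  split; rewrite -sqrtr_sqr; apply: le_lt_trans Hi.
    apply: ler_wpDr; first exact: sqrtr_ge0.
    apply: ler_wsqrtr; exact: (@coord_le (Ds i) D fst j Es jn').
  apply: ler_wpDl; first exact: sqrtr_ge0.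
  apply: ler_wsqrtr; exact: (@coord_le (Ds i) D snd j Es jn').
have hsize : \forall i \near \oo, size (Ds i) = size D.
  by apply: filterS (key 1 ltr01) => i [].
have eqn : \forall i \near \oo,
    \prod_(j < size D) lterm s2 (Ds i) g j = likelihood s2 (Ds i) g.
  by apply: filterS hsize => i Es; rewrite (@likelihoodEn s2 (Ds i) g _ Es).
have HH := near_eq_cvg eqn.
apply: cvg_trans; first exact: HH.
rewrite (@likelihoodEn s2 D g _ (erefl (size D))).
apply: (@cvg_prod_ord _ _ _ (size D) (fun j i => lterm s2 (Ds i) g j)) => j.
rewrite /lterm.
have cx : (nth (0,0) (Ds i) j).1 @[i --> \oo] --> (nth (0,0) D j).1.
  apply/cvgrPdist_lt => e e0; apply: filterS (key e e0) => i [_ /(_ j (ltn_ord j)) [h1 h2]].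
  by rewrite distrC.
have cy : (nth (0,0) (Ds i) j).2 @[i --> \oo] --> (nth (0,0) D j).2.
  apply/cvgrPdist_lt => e e0; apply: filterS (key e e0) => i [_ /(_ j (ltn_ord j)) [h1 h2]].
  by rewrite distrC.
have E : forall i, normal_pdf (g (nth (0, 0) (Ds i) j).1) (Num.sqrt s2) (nth (0, 0) (Ds i) j).2
   = normal_pdf 0 (Num.sqrt s2) ((nth (0, 0) (Ds i) j).2 - g (nth (0, 0) (Ds i) j).1).
  by move=> i; rewrite npdf_shift ?sqrt_neq0.
rewrite (funext E) npdf_shift ?sqrt_neq0 //.
have h1 : (fun i => (nth (0,0) (Ds i) j).2 - g (nth (0,0) (Ds i) j).1) @ \oo -->
   (nth (0,0) D j).2 - g (nth (0,0) D j).1.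
  apply: cvgB; first exact: cy.
  exact: (cvg_comp _ _ cx (gC _)).
have h2 := cvg_comp _ _ h1 (@continuous_normal_pdf R 0 _ (sqrt_neq0 _ s0) ((nth (0,0) D j).2 - g (nth (0,0) D j).1)).
exact: h2.
Qed.

Lemma Rint_cvg0 d (Omega : measurableType d) (P : probability Omega R)
  (F_ : nat -> Omega -> R) (F : Omega -> R) (C : R) :
  0 <= C ->
  (forall n, measurable_fun setT (F_ n)) ->
  (forall n w, `|F_ n w| <= C) ->
  (forall w, F_ n w @[n --> \oo] --> F w) ->
  Rintegral P setT (F_ n) @[n --> \oo] --> Rintegral P setT F.
Proof.
move=> C0 mF bF cF.
have mFl : measurable_fun setT F.
  apply: (measurable_realfun.measurable_fun_cvg (h:=F_)) => //.
have ig : P.-integrable setT (EFin \o cst C) :=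
  finite_measure_integrable_cst P C measurableT.
have ff : forall w, setT w -> (EFin \o F_ n) w @[n --> \oo] --> (EFin \o F) w.
  move=> w _; apply: cvg_EFin; first exact: nearW.
  exact: (cF w).
have fg : forall n w, setT w -> (`|(EFin \o F_ n) w| <= (EFin \o cst C) w)%E.
  move=> n w _; change (`|(F_ n w)%:E| <= C%:E)%E.
  by rewrite abse_EFin lee_fin.
have H := @dominated_cvg _ _ _ P setT measurableT (fun n => EFin \o F_ n)
  (EFin \o F) (EFin \o cst C)
  (fun n => proj2 (measurable_realfun.measurable_EFinP _ _) (mF n)) ff (fun _ _ => erefl) ig fg.
have iF : P.-integrable setT (EFin \o F) :=
  lebesgue_integral_dominated_convergence.dominated_integrable (mu:=P) measurableT (fun n => EFin \o F_ n)
  (EFin \o F) (EFin \o cst C)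
  (fun n => proj2 (measurable_realfun.measurable_EFinP _ _) (mF n)) ff ig fg.
have fin : (\int[P]_(x in setT) (EFin \o F) x)%E \is a fin_num.
  exact: integrable_fin_num iF.
rewrite -(fineK fin) in H.
exact: (fine_cvg H).
Qed.

Lemma Rint_cvg d (Omega : measurableType d) (P : probability Omega R)
  (F_ : nat -> Omega -> R) (F : Omega -> R) (C : R) :
  0 <= C ->
  (forall n, measurable_fun setT (F_ n)) ->
  (\forall n \near \oo, forall w, `|F_ n w| <= C) ->
  (forall w, F_ n w @[n --> \oo] --> F w) ->
  Rintegral P setT (F_ n) @[n --> \oo] --> Rintegral P setT F.
Proof.
move=> C0 mF [N _ hN] cF.
rewrite -(cvg_shiftn N).
apply: (@Rint_cvg0 d Omega P (fun n => F_ (n + N)%N) F C C0).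
- by move=> n; exact: mF.
- by move=> n w; apply: hN; rewrite /= leq_addl.
- by move=> w; have := cF w; rewrite -(cvg_shiftn N).
Qed.

Lemma Rint_pos d (Omega : measurableType d) (P : probability Omega R)
  (F : Omega -> R) (C : R) :
  measurable_fun setT F -> (forall w, 0 < F w) -> (forall w, F w <= C) ->
  0 < Rintegral P setT F.
Proof.
move=> mF F0 FC.
have mF' := proj2 (@measurable_realfun.measurable_EFinP _ _ _ setT F) mF.
have iF : P.-integrable setT (EFin \o F).
  apply: le_integrable (finite_measure_integrable_cst P C measurableT) => //.
  move=> w _; change (`|(F w)%:E| <= `|C%:E|)%E.
  rewrite !abse_EFin lee_fin (gtr0_norm (F0 w)).
  exact: le_trans (FC w) (ler_norm C).
have fin : (\int[P]_(x in setT) (EFin \o F) x)%E \is a fin_num.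
  exact: integrable_fin_num iF.
have ge0 : (0 <= \int[P]_(x in setT) (EFin \o F) x)%E.
  by apply: integral_ge0 => w _; rewrite lee_fin ltW.
rewrite /Rintegral; apply: fine_gt0; apply/andP; split; last first.
  by move/fin_numPlt: fin => /andP[].
rewrite lt0e ge0 andbT; apply/negP => /eqP I0.
have : (\int[P]_(x in setT) `|(EFin \o F) x| = 0)%E.
  rewrite -I0; apply: eq_integral => w _.
  by rewrite gee0_abs // lee_fin ltW.
move/(ae_eq_integral_abs P measurableT mF') => [A [mA PA0 sub]].
have sA : [set: Omega] `<=` A.
  move=> w _; apply: sub => /= /(_ I) hw.
  by move: (F0 w); rewrite -lte_fin hw ltxx.
have := le_measure P (_ : [set: Omega] \in measurable) (_ : A \in measurable) sA.
move=> H0; have H1 := H0 (mem_set measurableT) (mem_set mA).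
have : (1 <= (0 : \bar R))%E.
  rewrite -PA0 -(@probability_setT _ _ _ P); exact: H1.
by rewrite lee_fin ler10.
Qed.

Lemma lik_ub2 (s2 : R) (s : @dataset R) (g : R -> R) : 0 < s2 ->
  likelihood s2 s g <= normal_peak (Num.sqrt s2) ^+ size s.
Proof.
move=> s0; rewrite /likelihood; elim: s => [|p s IH].
  by rewrite big_nil expr0.
rewrite big_cons exprS /=; apply: ler_pM => //.
- exact: normal_pdf_ge0.
- by apply: prodr_ge0 => q _; exact: normal_pdf_ge0.
- by apply: normal_pdf_ub; exact: sqrt_neq0.
Qed.

Lemma lik_ge0 (s2 : R) (s : @dataset R) (g : R -> R) : 0 <= likelihood s2 s g.
Proof. by apply: prodr_ge0 => q _; exact: normal_pdf_ge0. Qed.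

Lemma dD_size (Ds : nat -> @dataset R) (D : @dataset R) :
  dD (Ds i) D @[i --> \oo] --> 0%E -> \forall i \near \oo, size (Ds i) = size D.
Proof.
move=> H.
have hn : nbhs (0%E : \bar R) [set u | (u < 1%:E)%E].
  by apply: open_ereal_lt'; rewrite lte_fin.
have H1 : \forall i \near \oo, (dD (Ds i) D < 1%:E)%E by exact: H hn.
apply: filterS H1 => i.
by rewrite /dD; case: eqP => // _; rewrite ltNge leey.
Qed.

End aux.

Theorem mainTheorem10 (R : realType) (d : measure_display)
  (Omega : measurableType d) (P : probability Omega R)
  (f fs fn : Omega -> R -> R) (sigma2 : R) :
  noisy_process P f fs fn sigma2 ->
  forall (Ds : nat -> dataset) (D : dataset),
    dD (Ds i) D @[i --> \oo] --> 0%E ->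
    noisy_weak_cvg
      (fun i => post_smooth_expect P fs sigma2 (Ds i)) (fun _ => sigma2)
      (post_smooth_expect P fs sigma2 D) sigma2.
Proof.
move=> [s0 [_ [fsC [fsM _]]]] Ds D H.
split; last exact: cvg_cst.
move=> h [M hM] hC.
pose K := normal_peak (Num.sqrt sigma2) ^+ size D.
have K0 : 0 <= K by rewrite exprn_ge0 // normal_peak_ge0.
have mh : measurable_fun setT (fun w => h (fs w)) :=
  @meas_within R d Omega fs h fsC fsM hC.
have mL : forall s, measurable_fun setT (fun w => likelihood sigma2 s (fs w)).
  move=> s; apply: (@meas_within R d Omega fs (fun g => likelihood sigma2 s g) fsC fsM).
  apply: continuous_subspaceT; exact: (lik_cont sigma2 s s0).
have num : Rintegral P setT (fun w => h (fs w) * likelihood sigma2 (Ds i) (fs w))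
    @[i --> \oo] --> Rintegral P setT (fun w => h (fs w) * likelihood sigma2 D (fs w)).
  apply: (@Rint_cvg R d Omega P (fun i w => h (fs w) * likelihood sigma2 (Ds i) (fs w))
    (fun w => h (fs w) * likelihood sigma2 D (fs w)) (`|M| * K)).
  - by rewrite mulr_ge0.
  - by move=> n; apply: measurable_realfun.measurable_funM => //; exact: mL.
    apply: filterS (dD_size Ds D H) => i Es w.
    rewrite normrM (ger0_norm (lik_ge0 _ _ _)).
    apply: ler_pM => //; first exact: lik_ge0.
      exact: le_trans (hM _ (fsC w)) (ler_norm M).
    by rewrite /K -Es; exact: lik_ub2.
  - move=> w; apply: cvgM; first exact: cvg_cst.
    exact: lik_cvg s0 (fsC w) H.
have den : Rintegral P setT (fun w => likelihood sigma2 (Ds i) (fs w))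
    @[i --> \oo] --> Rintegral P setT (fun w => likelihood sigma2 D (fs w)).
  apply: (@Rint_cvg R d Omega P (fun i w => likelihood sigma2 (Ds i) (fs w))
    (fun w => likelihood sigma2 D (fs w)) K K0).
  - by move=> n; exact: mL.
  - apply: filterS (dD_size Ds D H) => i Es w.
    rewrite (ger0_norm (lik_ge0 _ _ _)).
    by rewrite /K -Es; exact: lik_ub2.
  - by move=> w; exact: lik_cvg s0 (fsC w) H.
have pos : 0 < Rintegral P setT (fun w => likelihood sigma2 D (fs w)).
  apply: (@Rint_pos R d Omega P _ K (mL D)).
    by move=> w; exact: lik_gt0.
  by move=> w; exact: lik_ub2.
rewrite /post_smooth_expect.
apply: cvgM; first exact: num.
by apply: cvgV; [rewrite gt_eqF | exact: den].
Qed.
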